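(* In FSM the following equivalences hold: (1) CUT(fin) $\Leftrightarrow$ CC(fin); (2) CUT(2) $\Leftrightarrow$ CC(2).
   Context: Framework (FSM). Work in ZF with a fixed infinite set $A$ of atoms; $S_A$ is the group of bijections of $A$ fixing all but finitely many atoms; $Fix(S)$ is the set of $\pi\in S_A$ fixing each element of $S\subseteq A$; $S$ supports $x$ if $\pi\cdot x=x$ for all $\pi\in Fix(S)$. An invariant set is an $S_A$-set all of whose elements have finite supports; subsets carry $\pi\star Z=\{\pi\cdot z:z\in Z\}$; $\mathbb N$ carries the trivial action. A function (including a sequence $n\mapsto X_n$ or a choice function) is finitely supported if there is a finite $S$ with $f(\pi\cdot x)=\pi\cdot f(x)$ for all $\pi\in Fix(S)$. Principles: CC(fin): for every invariant set $X$ and every sequence $(X_n)_{n\in\mathbb N}$ of nonempty finite subsets of $X$ such that $n\mapsto X_n$ is finitely supported, there is a finitely supported choice function on $\{X_n\}$. CUT(fin): for every invariant set $X$ and every sequence $(X_n)_{n\in\mathbb N}$ of nonempty finite subsets of $X$ with $n\mapsto X_n$ finitely supported, there is a finitely supported surjection $\mathbb N\to\bigcup_nX_n$. CC(2) and CUT(2) are the same statements with ''nonempty finite'' replaced by ''two-element''. *)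

(* Defs.v *)
From Stdlib Require Import List.
Import ListNotations.
Set Implicit Arguments.

Section FSM.
Variable A : Type.

Definition infinite_atoms : Prop := forall l : list A, exists a, ~ In a l.

Record perm := Perm {
  pfun : A -> A;
  pinv : A -> A;
  pfunK : forall a, pinv (pfun a) = a;
  pinvK : forall a, pfun (pinv a) = a;
  psupp : list A;
  pfix : forall a, ~ In a psupp -> pfun a = a }.

Definition pid : perm.
Proof. refine (@Perm (fun a => a) (fun a => a) _ _ [] _); auto. Defined.

Definition pcomp (p q : perm) : perm.
Proof.
  refine (@Perm (fun a => pfun p (pfun q a)) (fun a => pinv q (pinv p a)) _ _
                (psupp p ++ psupp q) _).
  - intro a; rewrite pfunK, pfunK; reflexivity.
  - intro a; rewrite pinvK, pinvK; reflexivity.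
  - intros a H. rewrite (pfix q), (pfix p); auto;
      intro H'; apply H; apply in_or_app; auto.
Defined.

Definition fixes (S : list A) (p : perm) : Prop :=
  forall a, In a S -> pfun p a = a.

Record invset := InvSet {
  car : Type;
  act : perm -> car -> car;
  act_ext : forall p q x, (forall a, pfun p a = pfun q a) -> act p x = act q x;
  act_id : forall x, act pid x = x;
  act_comp : forall p q x, act (pcomp p q) x = act p (act q x);
  act_fs : forall x, exists S : list A, forall p, fixes S p -> act p x = x }.

Definition set_act (X : invset) (p : perm) (Z : car X -> Prop) : car X -> Prop :=
  fun y => exists z, Z z /\ y = act X p z.

Definition set_eq (X : invset) (Z W : car X -> Prop) : Prop :=
  forall y, Z y <-> W y.

Definition nonempty_finite (X : invset) (Z : car X -> Prop) : Prop :=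
  (exists x, Z x) /\ (exists l : list (car X), forall x, Z x <-> In x l).

Definition two_elem (X : invset) (Z : car X -> Prop) : Prop :=
  exists x y, x <> y /\ forall z, Z z <-> (z = x \/ z = y).

(* The sequence n |-> X_n is finitely supported (N has the trivial action). *)
Definition fs_seq (X : invset) (Xs : nat -> car X -> Prop) : Prop :=
  exists S : list A, forall p, fixes S p -> forall n, @set_eq X (Xs n) (@set_act X p (Xs n)).

Definition fs_choice (X : invset) (Xs : nat -> car X -> Prop) : Prop :=
  exists g : (car X -> Prop) -> car X,
    (forall n, Xs n (g (Xs n))) /\
    exists S : list A, forall p, fixes S p -> forall n m,
      @set_eq X (Xs m) (@set_act X p (Xs n)) -> g (Xs m) = act X p (g (Xs n)).

Definition fs_surj_onto_union (X : invset) (Xs : nat -> car X -> Prop) : Prop :=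
  exists h : nat -> car X,
    (forall k, exists n, Xs n (h k)) /\
    (forall n x, Xs n x -> exists k, h k = x) /\
    exists S : list A, forall p, fixes S p -> forall k, act X p (h k) = h k.

Definition CC_fin : Prop :=
  forall (X : invset) (Xs : nat -> car X -> Prop),
    (forall n, @nonempty_finite X (Xs n)) -> @fs_seq X Xs -> @fs_choice X Xs.

Definition CUT_fin : Prop :=
  forall (X : invset) (Xs : nat -> car X -> Prop),
    (forall n, @nonempty_finite X (Xs n)) -> @fs_seq X Xs -> @fs_surj_onto_union X Xs.

Definition CC_2 : Prop :=
  forall (X : invset) (Xs : nat -> car X -> Prop),
    (forall n, @two_elem X (Xs n)) -> @fs_seq X Xs -> @fs_choice X Xs.

Definition CUT_2 : Prop :=
  forall (X : invset) (Xs : nat -> car X -> Prop),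
    (forall n, @two_elem X (Xs n)) -> @fs_seq X Xs -> @fs_surj_onto_union X Xs.

End FSM.

(* Main.v *)
Require Import Defs.
From Stdlib Require Import List Arith Lia Classical ClassicalEpsilon Cantor.
Import ListNotations.
Set Implicit Arguments.

Section S.
Variable A : Type.

Definition pinvp (p : perm A) : perm A.
Proof.
  refine (@Perm A (pinv p) (pfun p) (pinvK p) (pfunK p) (psupp p) _).
  intros a H. rewrite <- (pfix p a H) at 1. apply pfunK.
Defined.

Lemma fixes_inv (S : list A) p : fixes S p -> fixes S (pinvp p).
Proof. intros H a Ha. simpl. rewrite <- (H a Ha) at 1. apply pfunK. Qed.

Lemma fixes_appl (S T : list A) p : fixes (S ++ T) p -> fixes S p.
Proof. intros H a Ha; apply H; apply in_or_app; auto. Qed.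
Lemma fixes_appr (S T : list A) p : fixes (S ++ T) p -> fixes T p.
Proof. intros H a Ha; apply H; apply in_or_app; auto. Qed.

Lemma act_invK (X : invset A) p x : act X (pinvp p) (act X p x) = x.
Proof.
  rewrite <- act_comp. rewrite <- (act_id X x) at 2. apply act_ext.
  intro a; simpl. apply pfunK.
Qed.
Lemma act_Kinv (X : invset A) p x : act X p (act X (pinvp p) x) = x.
Proof.
  rewrite <- act_comp. rewrite <- (act_id X x) at 2. apply act_ext.
  intro a; simpl. apply pinvK.
Qed.
Lemma act_inj (X : invset A) p x y : act X p x = act X p y -> x = y.
Proof. intro H. rewrite <- (act_invK X p x), H. apply act_invK. Qed.

Lemma inv_set (X : invset A) p (Z : car X -> Prop) :
  set_eq X (set_act X p Z) Z -> forall x, Z (act X p x) <-> Z x.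
Proof.
  intros H x. split.
  - intro Hx. assert (set_act X p Z (act X p x)) as [z [Hz E]] by (apply H; auto).
    apply act_inj in E. subst; auto.
  - intro Hx. apply H. exists x; auto.
Qed.

Definition listinv (X : invset A) : invset A.
Proof.
  refine (@InvSet A (list (car X)) (fun p l => map (act X p) l) _ _ _ _).
  - intros p q l H. apply map_ext. intro; apply act_ext; auto.
  - intro l. rewrite <- (map_id l) at 2. apply map_ext. apply act_id.
  - intros p q l. rewrite map_map. apply map_ext. apply act_comp.
  - induction x as [|a l [S HS]].
    + exists []; auto.
    + destruct (act_fs X a) as [T HT]. exists (T ++ S). intros p Hp. simpl.
      rewrite HT, HS; eauto using fixes_appl, fixes_appr.
Defined.


Definition Enum (X : invset A) (Z : car X -> Prop) : list (car X) -> Prop :=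
  fun l => NoDup l /\ forall x, In x l <-> Z x.

Definition invp (X : invset A) p (Z : car X -> Prop) := forall x, Z (act X p x) <-> Z x.

Lemma invp_inv X p Z : invp X p Z -> invp X (pinvp p) Z.
Proof. intros H x. rewrite <- (H (act X (pinvp p) x)), act_Kinv. tauto. Qed.

Lemma enum_map X p Z l : invp X p Z -> Enum X Z l -> Enum X Z (map (act X p) l).
Proof.
  intros H [Hn Hl]. split.
  - apply NoDup_map_NoDup_ForallPairs; auto. intros x y _ _; apply act_inj.
  - intro x. rewrite in_map_iff. split.
    + intros [y [<- Hy]]. apply H, Hl; auto.
    + intro Hx. exists (act X (pinvp p) x). split; [apply act_Kinv|].
      apply Hl. apply (invp_inv H). auto.
Qed.

Lemma enum_inv X p Z : invp X p Z ->
  set_eq (listinv X) (Enum X Z) (set_act (listinv X) p (Enum X Z)).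
Proof.
  intros H l. split.
  - intro Hl. exists (map (act X (pinvp p)) l). split.
    + apply enum_map; auto. apply invp_inv; auto.
    + simpl. rewrite map_map. rewrite <- (map_id l) at 1. apply map_ext.
      intro; symmetry; apply act_Kinv.
  - intros [z [Hz ->]]. apply enum_map; auto.
Qed.

Lemma seteq_invp X p Z : set_eq X Z (set_act X p Z) -> invp X p Z.
Proof. intro H. intro x. apply inv_set. intro y. specialize (H y). tauto. Qed.

Definition pick (T : Type) (L : list T) (d : T) (i : nat) : T :=
  match L with [] => d | a :: _ => nth i L a end.

Lemma pick_map (T U : Type) (f : T -> U) L d i : pick (map f L) (f d) i = f (pick L d i).
Proof. destruct L as [|a t]; simpl; auto. destruct i; auto. apply map_nth. Qed.

Lemma pick_in (T : Type) (L : list T) d i : L <> [] -> In (pick L d i) L.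
Proof.
  destruct L as [|a t]; [tauto|]. intros _. change (In (nth i (a::t) a) (a::t)).
  destruct (nth_in_or_default i (a :: t) a) as [H|H]; auto. rewrite H; left; auto.
Qed.

Lemma pick_nth (T : Type) (L : list T) d i : i < length L -> pick L d i = nth i L d.
Proof. destruct L as [|a t]; simpl; intros; [lia|]. change (nth i (a::t) a = nth i (a::t) d). apply nth_indep; simpl; auto. Qed.

Lemma cc_to_cut (P : forall X : invset A, (car X -> Prop) -> Prop)
  (Pne : forall X Z, P X Z -> exists x, Z x)
  (PE : forall X Z, P X Z -> P (listinv X) (Enum X Z))
  (HCC : forall X Xs, (forall n, P X (Xs n)) -> fs_seq X Xs -> fs_choice X Xs) :
  forall X Xs, (forall n, P X (Xs n)) -> fs_seq X Xs -> fs_surj_onto_union X Xs.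
Proof.
  intros X Xs HP [S HS].
  pose (Y := fun n => Enum X (Xs n)).
  assert (HY : fs_seq (listinv X) Y).
  { exists S. intros p Hp n. apply enum_inv. apply seteq_invp. auto. }
  destruct (HCC (listinv X) Y (fun n => PE _ _ (HP n)) HY) as [g [Hg [SG HSG]]].
  destruct (Pne _ _ (HP 0)) as [x0 _].
  assert (Hne : forall n, g (Y n) <> []).
  { intros n E. destruct (Pne _ _ (HP n)) as [x Hx]. destruct (Hg n) as [_ Hl].
    apply Hl in Hx. rewrite E in Hx. destruct Hx. }
  exists (fun k => let (n, i) := of_nat k in pick (g (Y n)) x0 i). split; [|split].
  - intro k. destruct (of_nat k) as [n i]. exists n. apply (proj2 (Hg n)).
    apply pick_in; auto.
  - intros n x Hx. apply (proj2 (Hg n)) in Hx. apply In_nth with (d := x0) in Hx.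
    destruct Hx as [i [Hi Hx]]. exists (to_nat (n, i)). rewrite cancel_of_to.
    rewrite pick_nth; auto.
  - exists (SG ++ S). intros p Hp k. destruct (of_nat k) as [n i].
    assert (E : g (Y n) = map (act X p) (g (Y n))).
    { apply (HSG p (fixes_appl _ _ Hp) n n). apply enum_inv. apply seteq_invp.
      apply HS. eapply fixes_appr; eauto. }
    rewrite <- (pick_map (act X p) (g (Y n)) x0 i). simpl in E. rewrite <- E.
    destruct (g (Y n)) eqn:Eg; [exfalso; apply (Hne n Eg)|]. reflexivity.
Qed.


Lemma exists_least (Q : nat -> Prop) n : Q n -> exists k, Q k /\ forall j, j < k -> ~ Q j.
Proof.
  intro Hn. destruct (classic (exists k, Q k /\ forall j, j < k -> ~ Q j)) as [H|H]; auto.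
  exfalso. assert (forall m j, j < m -> ~ Q j).
  { induction m; intros j Hj; [lia|]. destruct (Nat.eq_dec j m) as [->|Hne].
    - intro Hm. apply H. exists m; auto.
    - apply IHm. lia. }
  apply (H0 (S n) n); auto.
Qed.

Lemma cut_to_cc (P : forall X : invset A, (car X -> Prop) -> Prop)
  (Pne : forall X Z, P X Z -> exists x, Z x)
  (HCUT : forall X Xs, (forall n, P X (Xs n)) -> fs_seq X Xs -> fs_surj_onto_union X Xs) :
  forall X Xs, (forall n, P X (Xs n)) -> fs_seq X Xs -> fs_choice X Xs.
Proof.
  intros X Xs HP Hseq.
  destruct (HCUT X Xs HP Hseq) as [h [Hh1 [Hh2 [SH HSH]]]].
  destruct Hseq as [S HS].
  destruct (Pne _ _ (HP 0)) as [x0 _].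
  pose (least := fun (Z : car X -> Prop) k => Z (h k) /\ forall j, j < k -> ~ Z (h j)).
  pose (g := fun Z => match excluded_middle_informative (exists k, least Z k) with
                     | left H => h (proj1_sig (constructive_indefinite_description _ H))
                     | right _ => x0 end).
  assert (Hspec : forall Z k, least Z k -> g Z = h k).
  { intros Z k Hk. unfold g. destruct excluded_middle_informative as [H|H].
    - destruct constructive_indefinite_description as [k' Hk']. simpl. f_equal.
      destruct Hk as [H1 H2], Hk' as [H1' H2'].
      destruct (Nat.lt_trichotomy k k') as [L|[L|L]]; auto.
      + exfalso; apply (H2' k); auto.
      + exfalso; apply (H2 k'); auto.
    - exfalso; apply H; eauto. }
  assert (Hex : forall n, exists k, least (Xs n) k).
  { intro n. destruct (Pne _ _ (HP n)) as [x Hx]. destruct (Hh2 n x Hx) as [k Hk].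
    subst x. apply exists_least with (Q := fun k => Xs n (h k)) in Hx. exact Hx. }
  exists g. split.
  - intro n. destruct (Hex n) as [k Hk]. rewrite (Hspec _ _ Hk). apply Hk.
  - exists (SH ++ S). intros p Hp n m Hnm.
    assert (Hn := HS p (fixes_appr _ _ Hp) n).
    destruct (Hex n) as [k Hk]. rewrite (Hspec _ _ Hk).
    assert (Hk' : least (Xs m) k).
    { assert (E : forall y, Xs m y <-> Xs n y).
      { intro y. rewrite (Hnm y), (Hn y). tauto. }
      destruct Hk as [H1 H2]. split; [apply E; auto|].
      intros j Hj Hc. apply (H2 j Hj). apply E; auto. }
    rewrite (Hspec _ _ Hk'). symmetry. apply HSH. eapply fixes_appl; eauto.
Qed.


Lemma nodup_exists (T : Type) (l0 : list T) : exists l, NoDup l /\ forall x, In x l <-> In x l0.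
Proof.
  induction l0 as [|a t [l [Hn Hl]]].
  - exists []; split; [constructor|simpl; tauto].
  - destruct (classic (In a l)) as [Ha|Ha].
    + exists l; split; auto. intro x; simpl; rewrite Hl. split; [tauto|].
      intros [<-|H]; auto. apply Hl; auto.
    + exists (a :: l); split; [constructor; auto|]. intro x; simpl; rewrite Hl; tauto.
Qed.

Fixpoint lists_upto (T : Type) (l0 : list T) (n : nat) : list (list T) :=
  match n with
  | 0 => [[]]
  | S n => [] :: flat_map (fun a => map (cons a) (lists_upto l0 n)) l0
  end.

Lemma lists_upto_spec (T : Type) (l0 : list T) n l :
  incl l l0 -> length l <= n -> In l (lists_upto l0 n).
Proof.
  revert l; induction n; intros l Hi Hl.
  - destruct l; simpl in *; [auto|lia].
  - destruct l as [|a t]; simpl; [auto|]. right. apply in_flat_map.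
    exists a. split; [apply Hi; left; auto|]. apply in_map.
    apply IHn; [intros x Hx; apply Hi; right; auto | simpl in Hl; lia].
Qed.

Lemma finite_sub (T : Type) (Q : T -> Prop) (L : list T) :
  (forall x, Q x -> In x L) -> exists L', forall x, Q x <-> In x L'.
Proof.
  revert Q; induction L as [|a t IH]; intros Q H.
  - exists []; intro x; split; [apply H|simpl; tauto].
  - destruct (IH (fun x => Q x /\ x <> a)) as [L' HL'].
    { intros x [Hx Hne]. destruct (H x Hx) as [E|E]; auto. congruence. }
    destruct (classic (Q a)) as [Ha|Ha].
    + exists (a :: L'). intro x. simpl. rewrite <- HL'.
      split; [intro Hx; destruct (classic (x = a)); auto|intros [<-|[]]; auto].
    + exists L'. intro x. rewrite <- HL'. split; [|tauto].
      intro Hx; split; auto. intros ->; auto.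
Qed.

Lemma enum_nef X Z : nonempty_finite X Z -> nonempty_finite (listinv X) (Enum X Z).
Proof.
  intros [[x Hx] [l0 Hl0]]. split.
  - destruct (nodup_exists l0) as [l [Hn Hl]]. exists l. split; auto.
    intro y. rewrite Hl, Hl0. tauto.
  - apply finite_sub with (L := lists_upto l0 (length l0)).
    intros l [Hn Hl]. apply lists_upto_spec.
    + intros y Hy. apply Hl0, Hl; auto.
    + apply NoDup_incl_length; auto. intros y Hy. apply Hl0, Hl; auto.
Qed.

Lemma enum_two X Z : two_elem X Z -> two_elem (listinv X) (Enum X Z).
Proof.
  intros [x [y [Hxy HZ]]]. exists [x; y], [y; x]. split.
  - intro E. inversion E; auto.
  - intro l. split.
    + intros [Hn Hl].
      assert (Hlen : length l <= 2).
      { change 2 with (length [x; y]). apply NoDup_incl_length; auto.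
        intros z Hz. apply Hl, HZ in Hz. simpl; destruct Hz; subst; auto. }
      assert (Hx : In x l) by (apply Hl, HZ; auto).
      assert (Hy : In y l) by (apply Hl, HZ; auto).
      destruct l as [|a [|b [|c t]]]; simpl in *; try lia; try tauto.
      * exfalso; apply Hxy; destruct Hx, Hy; try tauto; congruence.
      * inversion Hn; subst. simpl in *.
        destruct Hx as [->|[->|[]]], Hy as [->|[->|[]]]; try tauto.
    + intros [-> | ->]; split.
      * constructor; [simpl; intros [E|[]]; auto|constructor; [simpl; auto|constructor]].
      * intro z. rewrite HZ. simpl. split; [intros [E|[E|[]]]; subst; auto|intros [->| ->]; auto].
      * constructor; [simpl; intros [E|[]]; auto|constructor; [simpl; auto|constructor]].
      * intro z. rewrite HZ. simpl. split; [intros [E|[E|[]]]; subst; auto|intros [->| ->]; auto].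
Qed.

End S.

Theorem mainTheorem20 (A : Type) (HA : infinite_atoms A) :
  (CUT_fin A <-> CC_fin A) /\ (CUT_2 A <-> CC_2 A).
Proof.
  split; split; unfold CUT_fin, CC_fin, CUT_2, CC_2.
  - apply (@cut_to_cc A (fun X Z => nonempty_finite X Z)). intros X Z [H _]; auto.
  - apply (@cc_to_cut A (fun X Z => nonempty_finite X Z)).
    + intros X Z [H _]; auto.
    + apply enum_nef.
  - apply (@cut_to_cc A (fun X Z => two_elem X Z)).
    intros X Z [x [y [_ H]]]. exists x; apply H; auto.
  - apply (@cc_to_cut A (fun X Z => two_elem X Z)).
    + intros X Z [x [y [_ H]]]. exists x; apply H; auto.
    + apply enum_two.
Qed.
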